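(* \begin{enumerate} \item For the 4-taxon tree $T_{ab|cd}$ and the 2-state GM+I model, suppose $P=\phi_T(\mathbf s)$. Then generically the parameters in $\mathbf s$ related to invariable sites can be recovered from $P$ by the following formulas: $$\delta=\frac {|A_1|+|A_2|}{|B|},\ \ \boldsymbol \pi_I=\frac 1{|A_1|+|A_2|} \left ( |A_1|,|A_2|\right ),$$ where $B=\begin{pmatrix} p_{1212} & p_{1221} \\ p_{2112} & p_{2121} \end{pmatrix}$, $$A_1=\begin{pmatrix} p_{1111} & p_{1112} & p_{1121}\\ p_{1211} & p_{1212} & p_{1221}\\ p_{2111} & p_{2112} & p_{2121} \end{pmatrix}, \ \ A_2=\begin{pmatrix} p_{1212} & p_{1221} & p_{1222}\\ p_{2112} & p_{2121} & p_{2122}\\ p_{2212} & p_{2221} & p_{2222} \end{pmatrix}.$$ \item More generally, for the $\kappa$-state GM+I model on $T_{ab|cd}$, the invariable site parameters can be recovered from a generic point in the image of the parameterization map by rational formulas of the form $$\delta=\frac {\sum_{i\in[\kappa]}|A_i|}{|B|}, \ \ \boldsymbol \pi_I=\frac 1{\sum_{i\in[\kappa]} |A_i|} \left ( |A_1|,|A_2|,\dots, |A_\kappa|\right ).$$ Here $|B|$ is any $\kappa \times \kappa$ minor of $F_{ab|cd}$ that omits all rows and columns indexed by $ii$, and $|A_i|$ is the $(\kappa+1)\times(\kappa+1)$ minor obtained by including all rows and columns chosen for $B$ and in addition the $ii$ row and $ii$ column. \end{enumerate}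
   Context: The $\kappa$-state general Markov plus invariable sites (GM+I) model on a tree $T$: with probability $\delta$ (class size parameter) a site is invariable and is assigned state $i\in[\kappa]=\{1,\dots,\kappa\}$ with probability $\pi_I(i)$, where $\boldsymbol\pi_I=(\pi_I(1),\dots,\pi_I(\kappa))$; otherwise the site evolves under the general Markov (GM) model on $T$ (a root distribution $\boldsymbol\pi_{GM}$ and a $\kappa\times\kappa$ Markov matrix $M_e$ on each edge). The parameterization map $\phi_T$ sends parameters $\mathbf s$ to the joint distribution $P$ of states at the leaves, so $P=(1-\delta)P_{GM}+\delta\,\operatorname{diag}(\boldsymbol\pi_I)$ where $P_{GM}$ is a GM joint distribution on $T$ and $\operatorname{diag}(\boldsymbol\pi_I)$ is the array with $\pi_I(i)$ at entry $(i,i,\dots,i)$ and zeros elsewhere. $T_{ab|cd}$ is the binary 4-taxon tree whose internal edge induces the split $ab|cd$; pattern frequencies are $p_{ijkl}=P(i,j,k,l)$, indexed by the states at leaves $a,b,c,d$. The flattening $F_{ab|cd}$ is the $\kappa^2\times\kappa^2$ matrix with rows indexed by the states $ij$ at $(a,b)$, columns indexed by the states $kl$ at $(c,d)$, and $(ij,kl)$ entry $p_{ijkl}$. `Generically' means for all parameters outside a proper algebraic subvariety of the parameter space. *)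

(* Defs.v *)
From HB Require Import structures.
From mathcomp Require Import all_boot all_order all_algebra.
From mathcomp Require Import mpoly.
Set Implicit Arguments. Unset Strict Implicit. Unset Printing Implicit Defensive.
Import Order.TTheory GRing.Theory Num.Theory.
Local Open Scope ring_scope.

(* Edges of T_{ab|cd} are indexed by 'I_5:                                 *)
(*   0 = pendant edge to a,  1 = pendant edge to b,                         *)
(*   2 = internal edge (u -> v),                                            *)
(*   3 = pendant edge to c,  4 = pendant edge to d,                         *)
(* where u is the internal node adjacent to a,b (taken as the root) and v  *)
(* the internal node adjacent to c,d.                                       *)

Definition pidx (k : nat) : finType :=
  (unit + 'I_k + 'I_k + ('I_5 * 'I_k * 'I_k))%type.

Section Model.
Variables (R : realFieldType) (k : nat).

Definition param := pidx k -> R.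

Definition delta (s : param) : R := s (inl (inl (inl tt))).
Definition piI (s : param) (i : 'I_k) : R := s (inl (inl (inr i))).
Definition piGM (s : param) (i : 'I_k) : R := s (inl (inr i)).
(* entry (x,y) of the Markov matrix M_e : transition from state x to y *)
Definition Mk (s : param) (e : 'I_5) (x y : 'I_k) : R := s (inr (e, x, y)).

Definition is_prob_vector (v : 'I_k -> R) : Prop :=
  (forall i, 0 <= v i) /\ \sum_i v i = 1.

Definition is_markov (M : 'I_k -> 'I_k -> R) : Prop :=
  (forall x y, 0 <= M x y) /\ (forall x, \sum_y M x y = 1).

Definition param_space (s : param) : Prop :=
  [/\ 0 <= delta s <= 1, is_prob_vector (piI s), is_prob_vector (piGM s)
    & forall e, is_markov (Mk s e)].

Definition PGM (s : param) (i j l m : 'I_k) : R :=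
  \sum_(x < k) \sum_(y < k)
     piGM s x * Mk s 0 x i * Mk s 1 x j * Mk s 2 x y * Mk s 3 y l * Mk s 4 y m.

Definition phiT (s : param) (i j l m : 'I_k) : R :=
  (1 - delta s) * PGM s i j l m
  + delta s * (if [&& i == j, j == l & l == m] then piI s i else 0).

Definition flattening (s : param) (u w : 'I_k * 'I_k) : R :=
  phiT s u.1 u.2 w.1 w.2.

Definition coords (s : param) : 'I_#|pidx k| -> R := fun n => s (enum_val n).

Definition generically (Prop_s : param -> Prop) : Prop :=
  exists Q : {mpoly R[#|pidx k|]},
    (exists s0, param_space s0 /\ Q.@[coords s0] != 0) /\
    (forall s, param_space s -> Q.@[coords s] != 0 -> Prop_s s).

Definition Bmx (s : param) (r c : 'I_k -> 'I_k * 'I_k) : 'M[R]_k :=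
  \matrix_(p, q) flattening s (r p) (c q).

(* rows/columns of A_i : the index ii, followed by the rows (columns) of B *)
Definition ext_idx (i : 'I_k) (r : 'I_k -> 'I_k * 'I_k) (p : 'I_k.+1)
  : 'I_k * 'I_k :=
  match unlift ord0 p with None => (i, i) | Some p' => r p' end.

Definition Amx (s : param) (r c : 'I_k -> 'I_k * 'I_k) (i : 'I_k)
  : 'M[R]_k.+1 :=
  \matrix_(p, q) flattening s (ext_idx i r p) (ext_idx i c q).

End Model.

Definition st1 : 'I_2 := ord0.
Definition st2 : 'I_2 := ord_max.

Definition mx_of_seqs (R : ringType) (m n : nat) (L : seq (seq R)) : 'M[R]_(m, n) :=
  \matrix_(p < m, q < n) nth 0 (nth [::] L p) q.

Section Part1.
Variable R : realFieldType.
Variable s : param R 2.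
Local Notation p := (phiT s).

Definition B2 : 'M[R]_2 := mx_of_seqs 2 2
  [:: [:: p st1 st2 st1 st2; p st1 st2 st2 st1];
      [:: p st2 st1 st1 st2; p st2 st1 st2 st1]].

Definition A2_1 : 'M[R]_3 := mx_of_seqs 3 3
  [:: [:: p st1 st1 st1 st1; p st1 st1 st1 st2; p st1 st1 st2 st1];
      [:: p st1 st2 st1 st1; p st1 st2 st1 st2; p st1 st2 st2 st1];
      [:: p st2 st1 st1 st1; p st2 st1 st1 st2; p st2 st1 st2 st1]].

Definition A2_2 : 'M[R]_3 := mx_of_seqs 3 3
  [:: [:: p st1 st2 st1 st2; p st1 st2 st2 st1; p st1 st2 st2 st2];
      [:: p st2 st1 st1 st2; p st2 st1 st2 st1; p st2 st1 st2 st2];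
      [:: p st2 st2 st1 st2; p st2 st2 st2 st1; p st2 st2 st2 st2]].
End Part1.

(* Main.v *)
Require Import Defs.
From HB Require Import structures.
From mathcomp Require Import all_boot all_order all_algebra.
From mathcomp Require Import mpoly.
From mathcomp Require Import ring lra.
Set Implicit Arguments. Unset Strict Implicit. Unset Printing Implicit Defensive.
Import Order.TTheory GRing.Theory Num.Theory.
Local Open Scope ring_scope.
Section Aux.
Variable R : fieldType.

Lemma det_add_delta n (A : 'M[R]_n.+1) t c :
  \det (A + c *: delta_mx t t) = \det A + c * cofactor A t t.
Proof.
rewrite (expand_det_row _ t) (expand_det_row A t).
have cofE j : cofactor (A + c *: delta_mx t t) t j = cofactor A t j.
  rewrite /cofactor; congr (_ * \det _); apply/matrixP => p q.
  by rewrite !mxE eq_sym (negbTE (neq_lift t p)) mulr0 addr0.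
under eq_bigr do rewrite cofE !mxE.
rewrite (bigD1 t) //= (bigD1 t (P := predT)) //= !eqxx mulr1.
rewrite mulrDl [RHS]addrAC; congr (_ + _).
by apply: eq_bigr => j /negbTE nj; rewrite /= nj mulr0 addr0.
Qed.

Lemma det_lowrank k (U : 'M[R]_(k.+1, k)) (W : 'M[R]_(k, k.+1)) :
  \det (U *m W) = 0.
Proof.
apply/eqP; apply: contraT => nz.
have : U *m W \in unitmx by rewrite unitmxE unitfE.
move/mxrank_unit => rk.
have := mxrankM_maxl U W; rewrite rk => h.
have := leq_trans h (rank_leq_col U); by rewrite ltnn.
Qed.
End Aux.

Section Core.
Variables (R : realFieldType) (k : nat) (s : param R k).

Definition Gmx n m (rho : 'I_n -> 'I_k * 'I_k) (gam : 'I_m -> 'I_k * 'I_k) : 'M[R]_(n, m) :=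
  \matrix_(p, q) ((1 - delta s) * PGM s (rho p).1 (rho p).2 (gam q).1 (gam q).2).

Lemma Gmx_low (rho gam : 'I_k.+1 -> 'I_k * 'I_k) : \det (Gmx rho gam) = 0.
Proof.
pose U : 'M[R]_(k.+1, k) := \matrix_(p, x) ((1 - delta s) *
   (piGM s x * Mk s 0 x (rho p).1 * Mk s 1 x (rho p).2)).
pose W : 'M[R]_(k, k.+1) := \matrix_(x, q)
   (\sum_(y < k) Mk s 2 x y * Mk s 3 y (gam q).1 * Mk s 4 y (gam q).2).
have -> : Gmx rho gam = U *m W; last exact: det_lowrank.
apply/matrixP => p q; rewrite !mxE /PGM big_distrr; apply: eq_bigr => x _.
rewrite !mxE big_distrr /= big_distrr; apply: eq_bigr => y _ /=.
ring.
Qed.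

Lemma core (rho gam : 'I_k.+1 -> 'I_k * 'I_k) t i :
  rho t = (i, i) -> gam t = (i, i) ->
  (forall p, p != t -> (rho p).1 != (rho p).2) ->
  (forall q, q != t -> (gam q).1 != (gam q).2) ->
  \det (\matrix_(p, q) flattening s (rho p) (gam q)) =
  delta s * piI s i * \det (\matrix_(p, q) flattening s (rho (lift t p)) (gam (lift t q))).
Proof.
move=> rt gt hr hg.
have E : \matrix_(p, q) flattening s (rho p) (gam q) =
    Gmx rho gam + (delta s * piI s i) *: delta_mx t t.
  apply/matrixP => p q; rewrite !mxE /flattening /phiT.
  congr (_ + _).
  have [->|npt] := eqVneq p t; have [->|nqt] := eqVneq q t.
  - by rewrite rt gt /= !eqxx mulr1.
  - by rewrite (negbTE (hg q nqt)) !andbF /= !mulr0.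
  - by rewrite (negbTE (hr p npt)) /= !mulr0.
  - by rewrite (negbTE (hr p npt)) /= !mulr0.
rewrite E det_add_delta Gmx_low add0r /cofactor addnn -signr_odd odd_double expr0 mul1r.
congr (_ * \det _); apply/matrixP => p q; rewrite !mxE /flattening /phiT.
have np : lift t p != t by rewrite eq_sym neq_lift.
by rewrite (negbTE (hr _ np)) /= mulr0 addr0.
Qed.

Definition myext (t : 'I_k.+1) (i : 'I_k) (r : 'I_k -> 'I_k * 'I_k) (p : 'I_k.+1) :=
  match unlift t p with None => (i, i) | Some p' => r p' end.

Lemma gen_det (r c : 'I_k -> 'I_k * 'I_k) t i :
  (forall p, (r p).1 != (r p).2) -> (forall q, (c q).1 != (c q).2) ->
  \det (\matrix_(p, q) flattening s (myext t i r p) (myext t i c q)) =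
  delta s * piI s i * \det (Bmx s r c).
Proof.
move=> hr hc; rewrite (core (t := t) (i := i)).
- congr (_ * \det _); apply/matrixP => p q; rewrite !mxE /myext !liftK //.
- by rewrite /myext unlift_none.
- by rewrite /myext unlift_none.
- by move=> p npt; case: (unliftP t p) npt => [p' ->|->]; rewrite ?eqxx // /myext liftK.
- by move=> p npt; case: (unliftP t p) npt => [p' ->|->]; rewrite ?eqxx // /myext liftK.
Qed.

Lemma main_s (r c : 'I_k -> 'I_k * 'I_k) :
  (forall p, (r p).1 != (r p).2) -> (forall q, (c q).1 != (c q).2) ->
  is_prob_vector (piI s) -> delta s != 0 -> \det (Bmx s r c) != 0 ->
  let dB := \det (Bmx s r c) in
  let dA := fun i => \det (Amx s r c i) in
  [/\ dB != 0, \sum_i dA i != 0,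
      delta s = (\sum_i dA i) / dB
    & forall i, piI s i = dA i / \sum_j dA j].
Proof.
move=> hr hc [_ hsum] hd hB dB dA.
have dAE i : dA i = delta s * piI s i * dB.
  exact: (@gen_det r c ord0 i hr hc).
have sE : \sum_i dA i = delta s * dB.
  under eq_bigr do rewrite dAE.
  by rewrite -big_distrl -big_distrr /= hsum mulr1.
split => //.
- by rewrite sE mulf_neq0.
- by rewrite sE mulfK.
- by move=> i; rewrite sE dAE [delta s * _]mulrC -[piI s i * _ * _]mulrA mulfK // mulf_neq0.
Qed.
End Core.

Section Poly.
Variables (R : realFieldType) (k : nat).
Local Notation N := #|pidx k|.

Definition XP (x : pidx k) : {mpoly R[N]} := 'X_(enum_rank x).
Definition dlt : pidx k := inl (inl (inl tt)).

Definition PGMX (i j l m : 'I_k) : {mpoly R[N]} :=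
  \sum_(x < k) \sum_(y < k)
     XP (inl (inr x)) * XP (inr (0, x, i)) * XP (inr (1, x, j)) * XP (inr (2, x, y))
     * XP (inr (3, y, l)) * XP (inr (4, y, m)).

Lemma evalXP (s : param R k) x : (XP x).@[coords s] = s x.
Proof. by rewrite /XP mevalXU /coords enum_rankK. Qed.

Lemma evalPGM (s : param R k) i j l m : (PGMX i j l m).@[coords s] = PGM s i j l m.
Proof.
rewrite /PGMX rmorph_sum; apply: eq_bigr => x _; rewrite rmorph_sum; apply: eq_bigr => y _.
by rewrite !rmorphM /= !evalXP.
Qed.

Definition BX (r c : 'I_k -> 'I_k * 'I_k) : 'M[{mpoly R[N]}]_k :=
  \matrix_(p, q) ((1 - XP dlt) * PGMX (r p).1 (r p).2 (c q).1 (c q).2).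

Definition QX r c := XP dlt * \det (BX r c).

Lemma evalQ (r c : 'I_k -> 'I_k * 'I_k) (s : param R k) :
  (forall p, (r p).1 != (r p).2) ->
  (QX r c).@[coords s] = delta s * \det (Bmx s r c).
Proof.
move=> hr; rewrite /QX rmorphM /= evalXP -det_map_mx; congr (_ * \det _).
apply/matrixP => p q; rewrite !mxE rmorphM rmorphB /= rmorph1 evalXP evalPGM.
by rewrite /flattening /phiT (negbTE (hr p)) /= mulr0 addr0.
Qed.
End Poly.

Section Point.
Variables (R : realFieldType) (k : nat) (r c : 'I_k -> 'I_k * 'I_k).
Hypotheses (k0 : (0 < k)%N) (rinj : injective r) (cinj : injective c)
  (hr : forall p, (r p).1 != (r p).2).

Definition fe (e : 'I_5) (x : 'I_k) : 'I_k :=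
  match nat_of_ord e with 0 => (r x).1 | 1 => (r x).2 | 2 => x | 3 => (c x).1 | _ => (c x).2 end.

Definition s0 : param R k := fun z =>
  match z with
  | inl (inl (inl _)) => 2^-1
  | inl (inl (inr _)) => k%:R^-1
  | inl (inr _) => k%:R^-1
  | inr (e, x, y) => (y == fe e x)%:R
  end.

Lemma kR : k%:R != 0 :> R.
Proof. by rewrite pnatr_eq0 -lt0n. Qed.

Lemma twoR : 2 != 0 :> R.
Proof. by rewrite pnatr_eq0. Qed.

Lemma unif_prob : is_prob_vector (fun _ : 'I_k => k%:R^-1 : R).
Proof.
split=> [i|]; first by rewrite invr_ge0 ler0n.
by rewrite sumr_const card_ord -[X in X = 1]mulr_natl mulfV // kR.
Qed.

Lemma s0_space : param_space s0.
Proof.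
split.
- rewrite /delta /=; apply/andP; split; first by rewrite invr_ge0 ler0n.
  by rewrite invf_le1 ?ltr0n // ler1n.
- exact: unif_prob.
- exact: unif_prob.
- move=> e; split=> [x y|x]; first by rewrite /Mk /= ler0n.
  rewrite /Mk /= (bigD1 (fe e x)) //= eqxx big1 ?addr0 // => y /negbTE -> //.
Qed.

Lemma pairE (a b : 'I_k * 'I_k) : ((a.1 == b.1)%:R * (a.2 == b.2)%:R : R) = (a == b)%:R.
Proof. by case: a b => a1 a2 [b1 b2] /=; rewrite -natrM mulnb xpair_eqE. Qed.

Lemma Bmx_s0 : Bmx s0 r c = ((1 - 2^-1) * k%:R^-1)%:M.
Proof.
apply/matrixP => p q; rewrite !mxE /flattening /phiT (negbTE (hr p)) /= mulr0 addr0.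
suff -> : PGM s0 (r p).1 (r p).2 (c q).1 (c q).2 = k%:R^-1 * (p == q)%:R.
  by rewrite /delta /=; case: eqVneq => _; rewrite ?mulr1 ?mulr0 ?mulr1n ?mulr0n.
rewrite /PGM.
transitivity (\sum_(x < k) k%:R^-1 * ((r p == r x)%:R * (c q == c x)%:R) : R).
  apply: eq_bigr => x _.
  rewrite (bigD1 x) //= big1 ?addr0; last first.
    by move=> y nyx; rewrite /Mk /fe /= (negbTE nyx) mulr0 !mul0r.
  rewrite /Mk /fe /= eqxx mulr1 -!pairE /piGM /=; ring.
under eq_bigr do rewrite (inj_eq rinj) (inj_eq cinj).
rewrite (bigD1 p) //= big1 ?addr0; last first.
  by move=> x /negbTE; rewrite eq_sym => ->; rewrite mul0r mulr0.
by rewrite eqxx mul1r eq_sym.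
Qed.

Lemma Q_s0 : (@QX R k r c).@[coords s0] != 0.
Proof.
rewrite evalQ // Bmx_s0 det_scalar /delta /=.
apply: mulf_neq0; first by rewrite invr_eq0 twoR.
apply: expf_neq0; apply: mulf_neq0; last by rewrite invr_eq0 kR.
have -> : (1 - 2^-1 : R) = 2^-1.
  by field.
by rewrite invr_eq0 twoR.
Qed.
End Point.

Lemma part2 (R : realFieldType) (k : nat) (r c : 'I_k -> 'I_k * 'I_k) :
     (0 < k)%N ->
     injective r -> injective c ->
     (forall p, (r p).1 != (r p).2) -> (forall q, (c q).1 != (c q).2) ->
     generically (fun s : param R k =>
        let dB := \det (Bmx s r c) in
        let dA := fun i => \det (Amx s r c i) in
        [/\ dB != 0, \sum_i dA i != 0,
            delta s = (\sum_i dA i) / dB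
          & forall i, piI s i = dA i / \sum_j dA j]).
Proof.
move=> k0 rinj cinj hr hc.
exists (@QX R k r c); split.
  exists (@s0 R k r c); split; first exact: s0_space.
  exact: Q_s0.
move=> s [_ hpi _ _]; rewrite evalQ // mulf_eq0 negb_or => /andP [hd hB].
exact: main_s.
Qed.

Definition r2 (p : 'I_2) : 'I_2 * 'I_2 := if p == st1 then (st1, st2) else (st2, st1).

Lemma I2 (p : 'I_2) : p = st1 \/ p = st2.
Proof. by case: p => [[|[|m]] Hp] //; [left|right]; apply/val_inj. Qed.

Lemma r2_st1 : r2 st1 = (st1, st2). Proof. by []. Qed.
Lemma r2_st2 : r2 st2 = (st2, st1). Proof. by []. Qed.

Lemma r2_inj : injective r2.
Proof.
by move=> p q; case: (I2 p) => ->; case: (I2 q) => ->; rewrite ?r2_st1 ?r2_st2 // => -[].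
Qed.

Lemma r2_off p : (r2 p).1 != (r2 p).2.
Proof. by case: (I2 p) => ->. Qed.

Lemma I3a (p : 'I_3) : p = ord0 \/ p = lift ord0 st1 \/ p = lift ord0 st2.
Proof. by case: p => [[|[|[|m]]] Hp] //; [left|right;left|right;right]; apply/val_inj. Qed.

Lemma I3b (p : 'I_3) : p = ord_max \/ p = lift ord_max st1 \/ p = lift ord_max st2.
Proof. by case: p => [[|[|[|m]]] Hp] //; [right;left|right;right|left]; apply/val_inj. Qed.

Section P1.
Variables (R : realFieldType) (s : param R 2).

Lemma B2E : B2 s = Bmx s r2 r2.
Proof.
by apply/matrixP => p q; rewrite !mxE; case: (I2 p) => ->; case: (I2 q) => ->.
Qed.

Lemma A21E : A2_1 s = \matrix_(p, q) flattening s (myext ord0 st1 r2 p) (myext ord0 st1 r2 q).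
Proof.
apply/matrixP => p q; rewrite !mxE.
by case: (I3a p) => [->|[->|->]]; case: (I3a q) => [->|[->|->]]; rewrite /myext ?liftK ?unlift_none.
Qed.

Lemma A22E : A2_2 s = \matrix_(p, q) flattening s (myext ord_max st2 r2 p) (myext ord_max st2 r2 q).
Proof.
apply/matrixP => p q; rewrite !mxE.
by case: (I3b p) => [->|[->|->]]; case: (I3b q) => [->|[->|->]]; rewrite /myext ?liftK ?unlift_none.
Qed.
End P1.

Theorem proposition12 (R : realFieldType) :
  (* part 1: kappa = 2, explicit formulas *)
  generically (fun s : param R 2 =>
     let dB := \det (B2 s) in
     let dA1 := \det (A2_1 s) in
     let dA2 := \det (A2_2 s) in
     [/\ dB != 0, dA1 + dA2 != 0,
         delta s = (dA1 + dA2) / dB,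
         piI s st1 = dA1 / (dA1 + dA2)
       & piI s st2 = dA2 / (dA1 + dA2)])
  /\
  (* part 2: general kappa, any kappa x kappa minor B avoiding rows/cols ii *)
  (forall (k : nat) (r c : 'I_k -> 'I_k * 'I_k),
     (0 < k)%N ->
     injective r -> injective c ->
     (forall p, (r p).1 != (r p).2) -> (forall q, (c q).1 != (c q).2) ->
     generically (fun s : param R k =>
        let dB := \det (Bmx s r c) in
        let dA := fun i => \det (Amx s r c i) in
        [/\ dB != 0, \sum_i dA i != 0,
            delta s = (\sum_i dA i) / dB
          & forall i, piI s i = dA i / \sum_j dA j])).
Proof.
split; last by move=> k r c; exact: part2.
exists (@QX R 2 r2 r2); split.
  exists (@s0 R 2 r2 r2); split; first exact: s0_space.
  apply: Q_s0 => //; by [exact: r2_inj | exact: r2_off].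
move=> s [_ [_ hsum] _ _]; rewrite evalQ; last exact: r2_off.
rewrite mulf_eq0 negb_or => /andP [hd hB].
move=> dB dA1 dA2.
have hB' : dB != 0 by rewrite /dB B2E.
have e1 : dA1 = delta s * piI s st1 * dB.
  by rewrite /dA1 /dB A21E B2E gen_det // => p; exact: r2_off.
have e2 : dA2 = delta s * piI s st2 * dB.
  by rewrite /dA2 /dB A22E B2E gen_det // => p; exact: r2_off.
have h12 : piI s st1 + piI s st2 = 1.
  rewrite -hsum (bigD1 st1) //= (bigD1 st2) //= big1 ?addr0 //.
  by move=> i /andP [h1 h2]; case: (I2 i) h1 h2 => ->; rewrite eqxx.
have eS : dA1 + dA2 = delta s * dB.
  by rewrite e1 e2 -mulrDl -mulrDr h12 mulr1.
have nz : delta s * dB != 0 by rewrite mulf_neq0.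
split => //.
- by rewrite eS.
- by rewrite eS mulfK.
- by rewrite eS e1 [delta s * _]mulrC -[piI s st1 * _ * _]mulrA mulfK.
- by rewrite eS e2 [delta s * _]mulrC -[piI s st2 * _ * _]mulrA mulfK.
Qed.
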